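(* Let $\mathbf x_1,\dots,\mathbf x_n\in\mathbb R^d$ with $\|\mathbf x_i\|_2=1$ be such that $\mathbf H^\infty$ is positive definite. Suppose $y_i=\alpha(\boldsymbol\beta^\top\mathbf x_i)^p$ for all $i\in[n]$, where $\alpha\in\mathbb R$, $\boldsymbol\beta\in\mathbb R^d$, and $p=1$ or $p=2l$ for some positive integer $l$. Then $$\sqrt{\mathbf y^\top(\mathbf H^\infty)^{-1}\mathbf y}\le3p|\alpha|\,\|\boldsymbol\beta\|_2^p.$$
   Context: $\mathbf y=(y_1,\dots,y_n)^\top$. $\mathbf H^\infty\in\mathbb R^{n\times n}$ is given by $\mathbf H^\infty_{ij}=\mathbb E_{\mathbf w\sim\mathcal N(\mathbf 0,\mathbf I)}[\mathbf x_i^\top\mathbf x_j\mathbb I\{\mathbf w^\top\mathbf x_i\ge0,\mathbf w^\top\mathbf x_j\ge0\}]=\frac{\mathbf x_i^\top\mathbf x_j(\pi-\arccos(\mathbf x_i^\top\mathbf x_j))}{2\pi}$. *)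

(* Defs.v *)
From Stdlib Require Export Reals Lra.
Open Scope R_scope.

Fixpoint rsum (n : nat) (f : nat -> R) : R :=
  match n with
  | O => 0
  | S m => rsum m f + f m
  end.

(* vectors in R^d are represented as functions nat -> R (only indices < d matter) *)
Definition dot (d : nat) (u v : nat -> R) : R := rsum d (fun k => u k * v k).
Definition norm2 (d : nat) (u : nat -> R) : R := sqrt (dot d u u).

Definition Hinf (d : nat) (x : nat -> nat -> R) (i j : nat) : R :=
  dot d (x i) (x j) * (PI - acos (dot d (x i) (x j))) / (2 * PI).

(* n x n matrices are functions nat -> nat -> R (indices < n) *)
Definition pos_def (n : nat) (H : nat -> nat -> R) : Prop :=
  forall v : nat -> R, (exists i, (i < n)%nat /\ v i <> 0) ->
    rsum n (fun i => rsum n (fun j => v i * H i j * v j)) > 0.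

Definition is_inverse (n : nat) (H G : nat -> nat -> R) : Prop :=
  forall i j, (i < n)%nat -> (j < n)%nat ->
    rsum n (fun k => H i k * G k j) = (if Nat.eqb i j then 1 else 0) /\
    rsum n (fun k => G i k * H k j) = (if Nat.eqb i j then 1 else 0).

Definition quad (n : nat) (A : nat -> nat -> R) (y : nat -> R) : R :=
  rsum n (fun i => rsum n (fun j => y i * A i j * y j)).

(* Main.v *)
Require Import Defs.
From Stdlib Require Import Reals.
From Coquelicot Require Import Coquelicot.
From Stdlib Require Import Lra Lia.
Open Scope R_scope.

Fixpoint sc (n:nat) : R := match n with
  | O => 1 | S O => 0 | S (S m) => sc m * INR (S m) / INR (S (S m)) end.
Definition ac (n:nat) : R := match n with O => 0 | S m => sc m / INR (S m) end.

Lemma sc_bounds : forall n, (0 <= sc n <= 1) /\ (0 <= sc (S n) <= 1).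
Proof.
  induction n as [|n [IH1 IH2]].
  - simpl; lra.
  - split; [exact IH2|].
    change (sc (S (S n))) with (sc n * INR (S n) / INR (S (S n))).
    assert (H1: 0 < INR (S n)) by (apply lt_0_INR; lia).
    assert (H2: INR (S (S n)) = INR (S n) + 1) by (rewrite S_INR; ring).
    rewrite H2. split.
    + apply Rmult_le_pos; [apply Rmult_le_pos; lra| left; apply Rinv_0_lt_compat; lra].
    + apply (Rmult_le_reg_r (INR (S n) + 1)); [lra|].
      unfold Rdiv; rewrite Rmult_assoc, Rinv_l by lra. nra.
Qed.

Lemma ac_bounds : forall n, 0 <= ac n <= 1.
Proof.
  intros [|m]; [simpl; lra|]. change (ac (S m)) with (sc m / INR (S m)).
  destruct (sc_bounds m) as [[H1 H2] _].
  assert (H: 1 <= INR (S m)) by (rewrite S_INR; pose proof (pos_INR m); lra).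
  split. apply Rmult_le_pos; [lra| left; apply Rinv_0_lt_compat; lra].
  apply (Rmult_le_reg_r (INR (S m))); [lra|].
  unfold Rdiv; rewrite Rmult_assoc, Rinv_l by lra. nra.
Qed.

Lemma PS_derive_ac : forall n, PS_derive ac n = sc n.
Proof.
  intro n; unfold PS_derive; change (ac (S n)) with (sc n / INR (S n)).
  assert (0 < INR (S n)) by (apply lt_0_INR; lia). field; lra.
Qed.

Lemma radius_ge1 : forall a : nat -> R, (forall n, Rabs (a n) <= 1) -> Rbar_le 1 (CV_radius a).
Proof.
  intros a Ha. destruct (CV_radius_bounded a) as [Hub _].
  apply Hub. exists 1. intro n. rewrite pow1, Rmult_1_r. apply Ha.
Qed.

Lemma radius_lt : forall a : nat -> R, (forall n, Rabs (a n) <= 1) ->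
  forall x, -1 < x < 1 -> Rbar_lt (Rabs x) (CV_radius a).
Proof.
  intros a Ha x Hx. pose proof (radius_ge1 a Ha) as H.
  destruct (CV_radius a) as [r| |]; simpl in *; auto.
  apply Rlt_le_trans with 1; auto. unfold Rabs; destruct Rcase_abs; lra.
Qed.

Lemma sc_abs : forall n, Rabs (sc n) <= 1.
Proof. intro n; destruct (sc_bounds n) as [H _]; rewrite Rabs_pos_eq; lra. Qed.
Lemma ac_abs : forall n, Rabs (ac n) <= 1.
Proof. intro n; pose proof (ac_bounds n); rewrite Rabs_pos_eq; lra. Qed.

Lemma sc_ode : forall t, -1 < t < 1 ->
  PSeries (PS_derive sc) t = t * (t * PSeries (PS_derive sc) t) + t * PSeries sc t.
Proof.
  intros t Ht.
  assert (E1 : ex_pseries sc t) by (apply CV_radius_inside, radius_lt; auto; apply sc_abs).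
  assert (E2 : ex_pseries (PS_derive sc) t) by (apply ex_pseries_derive, radius_lt; auto; apply sc_abs).
  rewrite <- !PSeries_incr_1.
  rewrite <- PSeries_plus by (repeat apply ex_pseries_incr_1; auto).
  apply PSeries_ext. intro n.
  unfold PS_plus, PS_incr_1, PS_derive, plus, zero.
  destruct n as [|[|m]].
  - simpl. ring.
  - simpl. field.
  - cbn -[INR sc]. unfold mult; simpl mult.
    change (sc (S (S (S m)))) with (sc (S m) * INR (S (S m)) / INR (S (S (S m)))).
    assert (0 < INR (S (S (S m)))) by (apply lt_0_INR; lia).
    rewrite !(S_INR (S (S m))), !(S_INR (S m)), !(S_INR m) in *.
    field. lra.
Qed.

Lemma const_from_deriv : forall f : R -> R,
  (forall c, -1 < c < 1 -> is_derive f c 0) -> forall t, -1 < t < 1 -> f t = f 0.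
Proof.
  intros f Hd t Ht.
  destruct (MVT_cor4 f (fun _ => 0) 0 (Rabs t)) with (b := t) as [c [Hc _]].
  - intros c Hc. apply Hd. rewrite Rminus_0_r in Hc.
    revert Hc; unfold Rabs; repeat destruct Rcase_abs; intros; lra.
  - rewrite Rminus_0_r; lra.
  - lra.
Qed.

Lemma B_closed : forall t, -1 < t < 1 -> PSeries sc t * sqrt (1 - t*t) = 1.
Proof.
  intros t Ht.
  assert (H0 : (fun t => PSeries sc t * sqrt (1 - t*t)) 0 = 1).
  { simpl. rewrite PSeries_0. simpl. rewrite Rmult_0_r, Rminus_0_r, sqrt_1. ring. }
  rewrite <- H0 at 2. apply (const_from_deriv (fun t => PSeries sc t * sqrt (1 - t*t))); auto.
  clear t Ht H0. intros t Ht.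
  assert (HB: is_derive (PSeries sc) t (PSeries (PS_derive sc) t)).
  { apply is_derive_PSeries, radius_lt; auto; apply sc_abs. }
  assert (Hpos : 0 < 1 - t*t) by nra.
  assert (HS: is_derive (fun t => sqrt (1 - t*t)) t (-(2*t)/(2*sqrt(1-t*t)))).
  { apply (is_derive_sqrt (fun t => 1 - t*t)); [|exact Hpos].
    auto_derive; auto. ring. }
  pose proof (is_derive_mult _ _ t _ _ HB HS Rmult_comm) as HM.
  unfold plus, mult in HM; simpl in HM.
  replace 0 with (PSeries (PS_derive sc) t * sqrt (1 - t * t) +
     PSeries sc t * (- (2 * t) / (2 * sqrt (1 - t * t)))); [exact HM|].
  pose proof (sc_ode t Ht) as Hode.
  assert (Hs : 0 < sqrt (1 - t*t)) by (apply sqrt_lt_R0; lra).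
  pose proof (sqrt_sqrt (1 - t*t) (Rlt_le _ _ Hpos)) as Hss.
  apply (Rmult_eq_reg_r (sqrt (1 - t*t))); [|lra].
  field_simplify; [|lra].
  rewrite <- Rsqr_pow2; unfold Rsqr; rewrite Hss. nra.
Qed.

Lemma asin_series : forall t, -1 < t < 1 -> PSeries ac t = asin t.
Proof.
  intros t Ht.
  assert (H0 : (fun t => PSeries ac t - asin t) 0 = 0).
  { simpl. rewrite PSeries_0, asin_0. simpl. ring. }
  apply Rminus_diag_uniq.
  rewrite <- H0. apply (const_from_deriv (fun t => PSeries ac t - asin t)); auto.
  clear t Ht H0. intros t Ht.
  assert (HA: is_derive (PSeries ac) t (PSeries (PS_derive ac) t)).
  { apply is_derive_PSeries, radius_lt; auto; apply ac_abs. }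
  assert (Has : is_derive asin t (1 / sqrt (1 - t²))).
  { apply is_derive_Reals. apply (derive_pt_eq_1 _ _ _ (derivable_pt_asin t Ht)).
    apply derive_pt_asin. }
  pose proof (is_derive_minus _ _ t _ _ HA Has) as HM.
  unfold minus, plus, opp in HM; simpl in HM.
  replace 0 with (PSeries (PS_derive ac) t + - (1 / sqrt (1 - t²))); [exact HM|].
  rewrite (PSeries_ext _ sc) by apply PS_derive_ac.
  pose proof (B_closed t Ht) as HB.
  assert (Hpos : 0 < 1 - t*t) by nra.
  assert (Hs : 0 < sqrt (1 - t*t)) by (apply sqrt_lt_R0; lra).
  unfold Rsqr. apply (Rmult_eq_reg_r (sqrt (1 - t*t))); [|lra].
  field_simplify; [|lra]. lra.
Qed.

Lemma asin_partial : forall t, -1 < t < 1 ->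
  is_lim_seq (fun N => sum_n (fun k => ac k * t ^ k) N) (asin t).
Proof.
  intros t Ht.
  assert (E : ex_pseries ac t) by (apply CV_radius_inside, radius_lt; auto; apply ac_abs).
  pose proof (PSeries_correct _ _ E) as H. rewrite asin_series in H by auto.
  unfold is_pseries, is_series in H.
  eapply is_lim_seq_ext; [|exact H].
  intro N. apply sum_n_ext. intro k. rewrite pow_n_pow. unfold scal; simpl. unfold mult; simpl. ring.
Qed.

Lemma rsum_ext : forall n f g, (forall i, (i < n)%nat -> f i = g i) -> rsum n f = rsum n g.
Proof. induction n; intros f g H; simpl; auto. rewrite (IHn f g) by (intros; apply H; lia). rewrite H by lia. auto. Qed.

Lemma rsum_plus : forall n f g, rsum n (fun i => f i + g i) = rsum n f + rsum n g.
Proof. induction n; intros; simpl; [ring|]. rewrite IHn; ring. Qed.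

Lemma rsum_scal : forall n c f, rsum n (fun i => c * f i) = c * rsum n f.
Proof. induction n; intros; simpl; [ring|]. rewrite IHn; ring. Qed.

Lemma rsum_swap : forall n m (f : nat -> nat -> R),
  rsum n (fun i => rsum m (fun j => f i j)) = rsum m (fun j => rsum n (fun i => f i j)).
Proof.
  induction n; intros; simpl.
  - induction m; simpl; auto. rewrite <- IHm; ring.
  - rewrite IHn. rewrite <- rsum_plus. auto.
Qed.

Lemma rsum_nonneg : forall n f, (forall i, (i < n)%nat -> 0 <= f i) -> 0 <= rsum n f.
Proof. induction n; intros f H; simpl; [lra|]. pose proof (H n ltac:(lia)). pose proof (IHn f ltac:(intros; apply H; lia)). lra. Qed.

Lemma rsum_ge_term : forall n f m, (forall i, (i < n)%nat -> 0 <= f i) -> (m < n)%nat -> f m <= rsum n f.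
Proof.
  induction n; intros f m H Hm; [lia|]. simpl.
  destruct (Nat.eq_dec m n) as [->|Hne].
  - pose proof (rsum_nonneg n f ltac:(intros; apply H; lia)). lra.
  - pose proof (IHn f m ltac:(intros; apply H; lia) ltac:(lia)). pose proof (H n ltac:(lia)). lra.
Qed.

Lemma rsum_sq : forall n w, rsum n (fun i => rsum n (fun j => w i * w j)) = rsum n w * rsum n w.
Proof.
  intros n w. rewrite (rsum_ext n _ (fun i => w i * rsum n w)).
  - rewrite (rsum_ext n (fun i => w i * rsum n w) (fun i => rsum n w * w i)) by (intros; ring).
    apply rsum_scal.
  - intros; apply rsum_scal.
Qed.

Lemma rsum_delta : forall n i (y : nat -> R), (i < n)%nat ->
  rsum n (fun j => (if Nat.eqb i j then 1 else 0) * y j) = y i.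
Proof.
  induction n; intros i y Hi; [lia|]. simpl.
  destruct (Nat.eq_dec i n) as [->|Hne].
  - rewrite Nat.eqb_refl. rewrite (rsum_ext n _ (fun _ => 0)).
    + clear. assert (rsum n (fun _ => 0) = 0) by (induction n; simpl; [auto|rewrite IHn; ring]). rewrite H; ring.
    + intros j Hj. replace (Nat.eqb n j) with false by (symmetry; apply Nat.eqb_neq; lia). ring.
  - rewrite IHn by lia. replace (Nat.eqb i n) with false by (symmetry; apply Nat.eqb_neq; lia). ring.
Qed.

Lemma rsum_lim : forall n (f : nat -> nat -> R) (l : nat -> R),
  (forall i, (i < n)%nat -> is_lim_seq (fun N => f N i) (l i)) ->
  is_lim_seq (fun N => rsum n (f N)) (rsum n l).
Proof.
  induction n; intros f l H; simpl.
  - apply is_lim_seq_const.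
  - apply (is_lim_seq_plus' _ _ (rsum n l) (l n)).
    + apply IHn; intros; apply H; lia.
    + apply H; lia.
Qed.

Lemma sum_n_rsum : forall f N, sum_n f N = rsum (S N) f.
Proof.
  intros f N; induction N.
  - rewrite sum_O. simpl. rewrite Rplus_0_l. auto.
  - rewrite sum_Sn, IHN. unfold plus; simpl. auto.
Qed.

Definition Qf d m n (z : nat -> nat -> R) (w : nat -> R) :=
  rsum n (fun i => rsum n (fun j => w i * w j * dot d (z i) (z j) ^ m)).

Lemma Q_nonneg : forall d m n z w, 0 <= Qf d m n z w.
Proof.
  intros d m n z. induction m; intros w; unfold Qf.
  - rewrite (rsum_ext n _ (fun i => rsum n (fun j => w i * w j))).
    + rewrite rsum_sq. nra.
    + intros; apply rsum_ext; intros; simpl; ring.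
  - rewrite (rsum_ext n _ (fun i => rsum n (fun j => rsum d (fun k =>
        (w i * z i k) * (w j * z j k) * dot d (z i) (z j) ^ m)))).
    + rewrite (rsum_ext n _ (fun i => rsum d (fun k => rsum n (fun j =>
        (w i * z i k) * (w j * z j k) * dot d (z i) (z j) ^ m)))) by (intros; apply rsum_swap).
      rewrite rsum_swap. apply rsum_nonneg. intros k _. apply (IHm (fun i => w i * z i k)).
    + intros i _. apply rsum_ext. intros j _.
      rewrite (rsum_ext d _ (fun k => (w i * w j * dot d (z i) (z j) ^ m) * (z i k * z j k))) by (intros; ring).
      rewrite rsum_scal. simpl pow. unfold dot at 1. ring.
Qed.

Definition dl (N : nat) := / INR (N + 1).
Definition rN (N : nat) := cos (dl N).

Lemma dl_bounds : forall N, 0 < dl N <= 1.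
Proof.
  intro N. unfold dl. assert (1 <= INR (N+1)) by (replace 1 with (INR 1) by auto; apply le_INR; lia).
  split. apply Rinv_0_lt_compat; lra.
  rewrite <- Rinv_1. apply Rinv_le_contravar; lra.
Qed.

Lemma rN_bounds : forall N, 0 < rN N < 1.
Proof.
  intro N. unfold rN. pose proof (dl_bounds N). pose proof PI2_1. split.
  - apply cos_gt_0; lra.
  - rewrite <- cos_0. apply cos_decreasing_1; lra.
Qed.

Lemma dl_lim : is_lim_seq dl 0.
Proof.
  unfold dl. apply (is_lim_seq_incr_n (fun n => / INR n) 1 0).
  pose proof (is_lim_seq_inv INR p_infty is_lim_seq_INR ltac:(discriminate)) as H.
  simpl in H. exact H.
Qed.

Lemma rN_lim : is_lim_seq rN 1.
Proof.
  unfold rN. rewrite <- cos_0. apply is_lim_seq_continuous.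
  - apply continuity_cos.
  - apply dl_lim.
Qed.

Lemma asin_rN : forall N, asin (rN N) = PI/2 - dl N.
Proof.
  intro N. unfold rN. rewrite <- sin_shift. apply asin_sin.
  pose proof (dl_bounds N). pose proof PI2_1. lra.
Qed.

Lemma entry_lim : forall t, -1 <= t <= 1 -> is_lim_seq (fun N => asin (rN N * t)) (asin t).
Proof.
  intros t Ht.
  destruct (Req_dec t 1) as [->|H1].
  - apply (is_lim_seq_ext (fun N => PI/2 - dl N)). { intro N. rewrite Rmult_1_r. symmetry. apply asin_rN. }
    rewrite asin_1. pose proof (is_lim_seq_minus' _ _ (PI/2) 0 (is_lim_seq_const _) dl_lim) as H.
    rewrite Rminus_0_r in H. exact H.
  - destruct (Req_dec t (-1)) as [->|H2].
    + apply (is_lim_seq_ext (fun N => - (PI/2 - dl N))). { intro N. replace (rN N * -1) with (- rN N) by ring. rewrite asin_opp, asin_rN. reflexivity. }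
      replace (-1) with (- (1)) by ring. rewrite asin_opp, asin_1. pose proof (is_lim_seq_minus' _ _ (PI/2) 0 (is_lim_seq_const _) dl_lim) as H.
      rewrite Rminus_0_r in H. apply (proj1 (is_lim_seq_opp _ _) H).
    + apply is_lim_seq_continuous.
      * apply derivable_continuous_pt, derivable_pt_asin. lra.
      * pose proof (is_lim_seq_mult' _ _ 1 t rN_lim (is_lim_seq_const t)) as H.
        rewrite Rmult_1_l in H. exact H.
Qed.

Lemma inner_exchange : forall d n z (v : nat -> R) r M,
  rsum n (fun i => rsum n (fun j => v i * v j *
    (dot d (z i) (z j) * rsum M (fun k => ac k * (r * dot d (z i) (z j)) ^ k))))
  = rsum M (fun k => ac k * r ^ k * Qf d (S k) n z v).
Proof.
  intros d n z v r M.
  rewrite (rsum_ext n _ (fun i => rsum M (fun k => rsum n (fun j =>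
      ac k * r ^ k * (v i * v j * dot d (z i) (z j) ^ (S k)))))).
  - rewrite rsum_swap. apply rsum_ext. intros k _. unfold Qf.
    rewrite <- rsum_scal. apply rsum_ext. intros i _. rewrite <- rsum_scal. apply rsum_ext. intros; ring.
  - intros i _. rewrite <- rsum_swap. apply rsum_ext. intros j _.
    rewrite (rsum_ext M (fun k => ac k * r ^ k * (v i * v j * dot d (z i) (z j) ^ S k))
       (fun k => (v i * v j * dot d (z i) (z j)) * (ac k * (r * dot d (z i) (z j)) ^ k)))
       by (intros; rewrite Rpow_mult_distr; simpl pow; ring).
    rewrite rsum_scal. ring.
Qed.

Lemma kernel_r : forall d n z v m r,
  (forall i j, (i < n)%nat -> (j < n)%nat -> -1 <= dot d (z i) (z j) <= 1) ->
  0 < r < 1 ->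
  ac m * r ^ m * Qf d (S m) n z v <=
  rsum n (fun i => rsum n (fun j => v i * v j * (dot d (z i) (z j) * asin (r * dot d (z i) (z j))))).
Proof.
  intros d n z v m r Hb Hr.
  set (u := fun M => rsum n (fun i => rsum n (fun j => v i * v j *
    (dot d (z i) (z j) * rsum (S M) (fun k => ac k * (r * dot d (z i) (z j)) ^ k))))).
  assert (Hu : is_lim_seq u (rsum n (fun i => rsum n (fun j => v i * v j * (dot d (z i) (z j) * asin (r * dot d (z i) (z j))))))).
  { unfold u. apply rsum_lim. intros i Hi. apply rsum_lim. intros j Hj.
    pose proof (Hb i j Hi Hj) as Hij.
    assert (Hrt : -1 < r * dot d (z i) (z j) < 1) by (split; nra).
    pose proof (is_lim_seq_mult' _ _ (v i * v j * dot d (z i) (z j)) _ (is_lim_seq_const _) (asin_partial _ Hrt)) as H.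
    replace (v i * v j * (dot d (z i) (z j) * asin (r * dot d (z i) (z j)))) with
      (v i * v j * dot d (z i) (z j) * asin (r * dot d (z i) (z j))) by ring.
    eapply is_lim_seq_ext; [|exact H]. intros N. cbv beta. rewrite sum_n_rsum. simpl. ring.
    }
  pose proof (proj1 (is_lim_seq_incr_n u m _) Hu) as Hu'.
  refine (is_lim_seq_le (fun _ => ac m * r ^ m * Qf d (S m) n z v) _ _ _ _ (is_lim_seq_const _) Hu').
  intro M. unfold u. rewrite inner_exchange.
  apply (rsum_ge_term (S (M + m)) (fun k => ac k * r ^ k * Qf d (S k) n z v) m).
  - intros k _. apply Rmult_le_pos; [apply Rmult_le_pos|].
    + apply ac_bounds.
    + apply pow_le; lra.
    + apply Q_nonneg.
  - lia.
Qed.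

Lemma kernel_bound : forall d n z v m,
  (forall i j, (i < n)%nat -> (j < n)%nat -> -1 <= dot d (z i) (z j) <= 1) ->
  ac m * Qf d (S m) n z v <=
  rsum n (fun i => rsum n (fun j => v i * v j * (dot d (z i) (z j) * asin (dot d (z i) (z j))))).
Proof.
  intros d n z v m Hb.
  assert (HL : is_lim_seq (fun N => rsum n (fun i => rsum n (fun j => v i * v j * (dot d (z i) (z j) * asin (rN N * dot d (z i) (z j))))))
     (rsum n (fun i => rsum n (fun j => v i * v j * (dot d (z i) (z j) * asin (dot d (z i) (z j))))))).
  { apply rsum_lim. intros i Hi. apply rsum_lim. intros j Hj.
    pose proof (is_lim_seq_mult' _ _ (v i * v j * dot d (z i) (z j)) _ (is_lim_seq_const _) (entry_lim _ (Hb i j Hi Hj))) as H.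
    replace (v i * v j * (dot d (z i) (z j) * asin (dot d (z i) (z j)))) with
      (v i * v j * dot d (z i) (z j) * asin (dot d (z i) (z j))) by ring.
    eapply is_lim_seq_ext; [|exact H]. intros N. cbv beta. ring. }
  assert (HP : is_lim_seq (fun N => ac m * rN N ^ m * Qf d (S m) n z v) (ac m * 1 ^ m * Qf d (S m) n z v)).
  { apply (is_lim_seq_mult' _ _ (ac m * 1 ^ m) _); [|apply is_lim_seq_const].
    apply (is_lim_seq_mult' _ _ (ac m) _); [apply is_lim_seq_const|].
    apply (is_lim_seq_continuous (fun x => x ^ m) rN 1). apply derivable_continuous_pt, derivable_pt_pow. apply rN_lim. }
  pose proof (is_lim_seq_le _ _ _ _ (fun N => kernel_r d n z v m (rN N) Hb (rN_bounds N)) HP HL) as H.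
  simpl in H. rewrite pow1, Rmult_1_r in H. exact H.
Qed.

Lemma rsum_S : forall n f, rsum (S n) f = rsum n f + f n.
Proof. reflexivity. Qed.

Lemma dot_sym : forall d u w, dot d u w = dot d w u.
Proof. intros; unfold dot; apply rsum_ext; intros; ring. Qed.

Lemma dot_nonneg : forall d u, 0 <= dot d u u.
Proof. intros; unfold dot; apply rsum_nonneg; intros; nra. Qed.

Lemma dot_comb : forall d u w s,
  rsum d (fun k => (u k + s * w k) * (u k + s * w k)) = dot d u u + 2 * s * dot d u w + s * s * dot d w w.
Proof.
  intros. unfold dot.
  rewrite (rsum_ext d _ (fun k => u k * u k + ((2 * s) * (u k * w k) + (s * s) * (w k * w k)))) by (intros; ring).
  rewrite !rsum_plus, !rsum_scal. ring.
Qed.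

Lemma dot_bound : forall d u w, dot d u u = 1 -> dot d w w = 1 -> -1 <= dot d u w <= 1.
Proof.
  intros d u w Hu Hw.
  assert (H1 : 0 <= rsum d (fun k => (u k + 1 * w k) * (u k + 1 * w k))) by (apply rsum_nonneg; intros; apply Rle_0_sqr).
  assert (H2 : 0 <= rsum d (fun k => (u k + (-1) * w k) * (u k + (-1) * w k))) by (apply rsum_nonneg; intros; apply Rle_0_sqr).
  rewrite dot_comb in H1, H2. lra.
Qed.

Lemma unit_dot : forall d u, norm2 d u = 1 -> dot d u u = 1.
Proof.
  intros d u H. unfold norm2 in H. rewrite <- (sqrt_sqrt (dot d u u)) by apply dot_nonneg.
  rewrite H; ring.
Qed.

Lemma Hinf_formula : forall d x i j, -1 <= dot d (x i) (x j) <= 1 ->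
  Hinf d x i j = / 4 * dot d (x i) (x j) + / (2 * PI) * (dot d (x i) (x j) * asin (dot d (x i) (x j))).
Proof.
  intros d x i j Hb. unfold Hinf. rewrite acos_asin by auto.
  pose proof PI_RGT_0. field. lra.
Qed.

Lemma sc_even : forall k, / INR (k + 1) <= sc (2 * k).
Proof.
  induction k.
  - simpl. lra.
  - replace (2 * S k)%nat with (S (S (2 * k))) by lia.
    change (sc (S (S (2 * k)))) with (sc (2 * k) * INR (S (2 * k)) / INR (S (S (2 * k)))).
    replace (INR (S (2 * k))) with (2 * INR k + 1) by (rewrite S_INR, mult_INR; simpl; ring).
    replace (INR (S (S (2 * k)))) with (2 * INR k + 2) by (rewrite !S_INR, mult_INR; simpl; ring).
    replace (INR (S k + 1)) with (INR k + 2) by (rewrite plus_INR, S_INR; simpl; ring).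
    replace (INR (k + 1)) with (INR k + 1) in IHk by (rewrite plus_INR; simpl; ring).
    pose proof (pos_INR k) as Hk.
    apply Rle_trans with (/ (INR k + 1) * (2 * INR k + 1) / (2 * INR k + 2)).
    + apply (Rmult_le_reg_r ((INR k + 2) * (INR k + 1) * (2 * INR k + 2))). nra.
      field_simplify; try lra.
    + unfold Rdiv. apply Rmult_le_compat_r. left; apply Rinv_0_lt_compat; lra.
      apply Rmult_le_compat_r; lra.
Qed.

Lemma final_arith : forall q S A alpha B c P, 0 < c -> q = alpha * A -> c * S <= q -> 0 <= S ->
  (forall t, 2 * t * A <= S + t * t * B) -> 0 <= B -> 1 <= 9 * P * P * c ->
  q <= (3 * P * Rabs alpha) * (3 * P * Rabs alpha) * B.
Proof.
  intros q S A alpha B c P Hc Hq HS HS0 Ht HB HP.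
  pose proof (Ht (alpha / c)) as H.
  assert (H1 : q <= alpha * alpha * B / c).
  { apply (Rmult_le_compat_l c) in H; [|lra].
    replace (c * (2 * (alpha / c) * A)) with (2 * q) in H by (rewrite Hq; field; lra).
    replace (c * (S + alpha / c * (alpha / c) * B)) with (c * S + alpha * alpha * B / c) in H by (field; lra).
    lra. }
  assert (H2 : alpha * alpha * B / c <= (3 * P * Rabs alpha) * (3 * P * Rabs alpha) * B).
  { replace ((3 * P * Rabs alpha) * (3 * P * Rabs alpha) * B) with (9 * P * P * (alpha * alpha * B)).
    2: { assert (Habs: Rabs alpha * Rabs alpha = alpha * alpha) by (rewrite <- Rabs_mult; apply Rabs_pos_eq; nra). rewrite <- Habs. ring. }
    assert (0 <= alpha * alpha * B) by (apply Rmult_le_pos; nra).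
    apply (Rmult_le_reg_r c); [lra|]. unfold Rdiv. rewrite Rmult_assoc, Rinv_l by lra. nra. }
  lra.
Qed.

Lemma extra_point : forall d n (x : nat -> nat -> R) beta v p t,
  2 * t * rsum n (fun i => v i * dot d beta (x i) ^ p) <=
  Qf d p n x v + t * t * dot d beta beta ^ p.
Proof.
  intros d n x beta v p t.
  set (z := fun i => if Nat.ltb i n then x i else beta).
  set (w := fun i => if Nat.ltb i n then v i else - t).
  pose proof (Q_nonneg d p (S n) z w) as H. unfold Qf in H.
  rewrite rsum_S in H.
  assert (Hz : forall i, (i < n)%nat -> z i = x i) by (intros i Hi; unfold z; rewrite (proj2 (Nat.ltb_lt i n) Hi); auto).
  assert (Hw : forall i, (i < n)%nat -> w i = v i) by (intros i Hi; unfold w; rewrite (proj2 (Nat.ltb_lt i n) Hi); auto).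
  assert (Hzn : z n = beta) by (unfold z; rewrite Nat.ltb_irrefl; auto).
  assert (Hwn : w n = - t) by (unfold w; rewrite Nat.ltb_irrefl; auto).
  rewrite (rsum_ext n _ (fun i => rsum n (fun j => v i * v j * dot d (x i) (x j) ^ p) +
      (- t) * (v i * dot d beta (x i) ^ p))) in H.
  2: { intros i Hi. rewrite rsum_S. rewrite Hz, Hw, Hzn, Hwn by auto. rewrite dot_sym.
       f_equal. apply rsum_ext. intros j Hj. rewrite Hz, Hw by auto. auto. ring. }
  rewrite rsum_S, Hzn, Hwn in H.
  rewrite (rsum_ext n (fun j => - t * w j * dot d beta (z j) ^ p)
     (fun j => (- t) * (v j * dot d beta (x j) ^ p))) in H.
  2: { intros j Hj. rewrite Hz, Hw by auto. ring. }
  rewrite rsum_plus, !rsum_scal in H. unfold Qf. nra.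
Qed.

Theorem theorem6p1 (n d : nat) (x : nat -> nat -> R) (y : nat -> R)
  (alpha : R) (beta : nat -> R) (p : nat) (Hinv : nat -> nat -> R) :
  (forall i, (i < n)%nat -> norm2 d (x i) = 1) ->
  pos_def n (Hinf d x) ->
  (p = 1%nat \/ exists l : nat, (1 <= l)%nat /\ p = (2 * l)%nat) ->
  (forall i, (i < n)%nat -> y i = alpha * (dot d beta (x i)) ^ p) ->
  is_inverse n (Hinf d x) Hinv ->
  sqrt (quad n Hinv y) <= 3 * INR p * Rabs alpha * (norm2 d beta) ^ p.
Proof.
  intros Hn _ Hp Hy HGinv.
  assert (Hb : forall i j, (i < n)%nat -> (j < n)%nat -> -1 <= dot d (x i) (x j) <= 1).
  { intros i j Hi Hj. apply dot_bound; apply unit_dot; auto. }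
  set (v := fun i => rsum n (fun j => Hinv i j * y j)).
  assert (HHv : forall i, (i < n)%nat -> rsum n (fun k => Hinf d x i k * v k) = y i).
  { intros i Hi. unfold v.
    rewrite (rsum_ext n _ (fun k => rsum n (fun j => Hinf d x i k * Hinv k j * y j))).
    2: { intros k _. rewrite <- rsum_scal. apply rsum_ext. intros; ring. }
    rewrite rsum_swap.
    rewrite (rsum_ext n _ (fun j => (if Nat.eqb i j then 1 else 0) * y j)).
    - apply rsum_delta; auto.
    - intros j Hj. rewrite <- (proj1 (HGinv i j Hi Hj)).
      rewrite (rsum_ext n _ (fun k => y j * (Hinf d x i k * Hinv k j))) by (intros; ring).
      rewrite rsum_scal. ring. }
  set (q := quad n Hinv y).
  assert (Hq1 : q = rsum n (fun i => v i * y i)).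
  { unfold q, quad, v. apply rsum_ext. intros i _.
    rewrite (rsum_ext n _ (fun j => y i * (Hinv i j * y j))) by (intros; ring).
    rewrite rsum_scal. ring. }
  assert (Hq2 : q = rsum n (fun i => rsum n (fun j => v i * Hinf d x i j * v j))).
  { rewrite Hq1. apply rsum_ext. intros i Hi.
    rewrite (rsum_ext n _ (fun j => v i * (Hinf d x i j * v j))) by (intros; ring).
    rewrite rsum_scal, HHv; auto. }
  set (E := rsum n (fun i => rsum n (fun j => v i * v j * (dot d (x i) (x j) * asin (dot d (x i) (x j)))))).
  assert (Hq3 : q = / 4 * Qf d 1 n x v + / (2 * PI) * E).
  { rewrite Hq2. unfold Qf, E. rewrite <- !rsum_scal, <- rsum_plus. apply rsum_ext. intros i Hi.
    rewrite <- !rsum_scal, <- rsum_plus. apply rsum_ext. intros j Hj.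
    rewrite Hinf_formula by auto. ring. }
  assert (HE : forall m, ac m * Qf d (S m) n x v <= E) by (intros; apply kernel_bound; auto).
  assert (HE0 : 0 <= E) by (pose proof (HE 0%nat) as H; simpl ac in H; lra).
  assert (HQ1 : 0 <= Qf d 1 n x v) by apply Q_nonneg.
  assert (HPI : 0 < / (2 * PI)) by (apply Rinv_0_lt_compat; pose proof PI_RGT_0; lra).
  set (A := rsum n (fun i => v i * dot d beta (x i) ^ p)).
  assert (HqA : q = alpha * A).
  { rewrite Hq1. unfold A. rewrite <- rsum_scal. apply rsum_ext. intros i Hi. rewrite Hy by auto. ring. }
  set (B := dot d beta beta ^ p).
  assert (HB0 : 0 <= B) by (apply pow_le, dot_nonneg).
  assert (Hnorm : (norm2 d beta ^ p) * (norm2 d beta ^ p) = B).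
  { unfold B, norm2. rewrite <- Rpow_mult_distr, sqrt_sqrt by apply dot_nonneg. auto. }
  assert (Hnn : 0 <= 3 * INR p * Rabs alpha * norm2 d beta ^ p).
  { apply Rmult_le_pos; [apply Rmult_le_pos; [pose proof (pos_INR p); lra| apply Rabs_pos]|].
    apply pow_le, sqrt_pos. }
  assert (Hfin : forall c, 0 < c -> c * Qf d p n x v <= q -> 1 <= 9 * INR p * INR p * c ->
     sqrt q <= 3 * INR p * Rabs alpha * norm2 d beta ^ p).
  { intros c Hc Hcq H9.
    pose proof (final_arith q (Qf d p n x v) A alpha B c (INR p) Hc HqA Hcq (Q_nonneg _ _ _ _ _)
       (fun t => extra_point d n x beta v p t) HB0 H9) as H.
    rewrite <- (sqrt_square (3 * INR p * Rabs alpha * norm2 d beta ^ p)) by auto.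
    apply sqrt_le_1_alt. rewrite <- Hnorm in H. nra. }
  destruct Hp as [-> | [l [Hl ->]]].
  - apply (Hfin (/ 4)); [lra| |simpl; lra].
    rewrite Hq3. nra.
  - destruct l as [|k]; [lia|].
    pose proof (sc_even k) as Hsc.
    assert (Hk1 : 0 < INR (k + 1)) by (apply lt_0_INR; lia).
    assert (Hscp : 0 < sc (2 * k)) by (eapply Rlt_le_trans; [apply Rinv_0_lt_compat, Hk1| exact Hsc]).
    assert (HS2k : 0 < INR (S (2 * k))) by (apply lt_0_INR; lia).
    pose proof (HE (S (2 * k))) as HEm.
    replace (S (S (2 * k))) with (2 * S k)%nat in HEm by lia.
    change (ac (S (2 * k))) with (sc (2 * k) / INR (S (2 * k))) in HEm.
    apply (Hfin (/ (2 * PI) * (sc (2 * k) / INR (S (2 * k))))).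
    + apply Rmult_lt_0_compat; auto. apply Rdiv_lt_0_compat; auto.
    + rewrite Hq3. rewrite Rmult_assoc. nra.
    + assert (I2 : INR 2 = 2) by (simpl; ring).
      replace (INR (2 * S k)) with (2 * INR k + 2) by (rewrite mult_INR, I2, S_INR; ring).
      replace (INR (S (2 * k))) with (2 * INR k + 1) in * by (rewrite S_INR, mult_INR, I2; ring).
      replace (INR (k + 1)) with (INR k + 1) in Hsc by (rewrite plus_INR; simpl; ring).
      pose proof (pos_INR k) as Ha. pose proof PI_4. pose proof PI_RGT_0.
      apply Rle_trans with (9 * (2 * INR k + 2) * (2 * INR k + 2) * (/ (2 * PI) * (/ (INR k + 1) / (2 * INR k + 1)))).
      * replace (9 * (2 * INR k + 2) * (2 * INR k + 2) * (/ (2 * PI) * (/ (INR k + 1) / (2 * INR k + 1))))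
          with (9 * (2 * INR k + 2) * (2 * INR k + 2) / (2 * PI * (INR k + 1) * (2 * INR k + 1))) by (field; lra).
        assert (HD : 0 < 2 * PI * (INR k + 1) * (2 * INR k + 1)) by (apply Rmult_lt_0_compat; [apply Rmult_lt_0_compat|]; lra).
        apply (Rmult_le_reg_r _ _ _ HD). rewrite Rmult_1_l.
        replace (9 * (2 * INR k + 2) * (2 * INR k + 2) / (2 * PI * (INR k + 1) * (2 * INR k + 1)) * (2 * PI * (INR k + 1) * (2 * INR k + 1)))
          with (9 * (2 * INR k + 2) * (2 * INR k + 2)) by (field; lra). nra.
      * apply Rmult_le_compat_l; [nra|]. apply Rmult_le_compat_l; [lra|].
        unfold Rdiv. apply Rmult_le_compat_r; [left; apply Rinv_0_lt_compat; lra|]. exact Hsc.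
Qed.
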